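(* For every $n\ge 1$ and every $\alpha'\in\dot\Delta'$ we have $r_{\alpha'}(\dot{\mathcal S}_n)\subset \dot{\mathcal S}'_{n+1}$ (and, symmetrically, $r_{\alpha}(\dot{\mathcal S}'_n)\subset \dot{\mathcal S}_{n+1}$ for every $\alpha\in\dot\Delta$).
   Context: Let $\tau=(1+\sqrt5)/2$, $\tau'=(1-\sqrt5)/2$. Identify $\mathbb{R}^4$ (standard dot product) with the quaternions. Let $\Delta\subset\mathbb{R}^4$ be the set of 120 vectors consisting of: the 8 vectors obtained from $(\pm1,0,0,0)$ by permuting coordinates; the 16 vectors $\frac12(\pm1,\pm1,\pm1,\pm1)$; and the 96 vectors obtained from $\frac12(0,\pm1,\pm\tau',\pm\tau)$ (all sign choices) by even permutations of the coordinates. Let $\Delta'$ be the image of $\Delta$ under the Galois conjugation $\tau\leftrightarrow\tau'$ applied to each coordinate. Put $K=\Delta\cap\Delta'$, $\dot\Delta=\Delta\setminus K$, $\dot\Delta'=\Delta'\setminus K$. For a unit vector $a$, $r_a(x)=x-2(x\cdot a)a$. Let $\mathbb F_4=\mathbb{Z}[\tau]/2\mathbb{Z}[\tau]$ (elements $\bar0,\bar1,\bar\tau,\bar{\tau'}$) and for $y\in\mathbb{Z}[\tau]^4$ let $\bar y\in\mathbb F_4^4$ be its coordinatewise reduction. Let $\dot A\subset\mathbb F_4^4$ be the 12 vectors obtained from $(\bar0,\bar1,\bar{\tau'},\bar\tau)$ by even permutations of coordinates, and $\dot A'$ the 12 vectors obtained from it by odd permutations. For $n\ge1$, $\dot{\mathcal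 S}_n=\{x\in 2^{-n}\mathbb{Z}[\tau]^4: x\cdot x=1,\ \overline{2^nx}\in\dot A\}$ and $\dot{\mathcal S}'_n=\{x\in 2^{-n}\mathbb{Z}[\tau]^4: x\cdot x=1,\ \overline{2^nx}\in\dot A'\}$. *)

(* Defs.v *)
From Stdlib Require Import Reals ZArith.
From mathcomp Require Import all_boot all_fingroup.

Set Implicit Arguments.
Unset Strict Implicit.
Unset Printing Implicit Defensive.

Local Open Scope R_scope.

Definition vec := 'I_4 -> R.

Definition tau : R := (1 + sqrt 5) / 2.
Definition tau' : R := (1 - sqrt 5) / 2.

Definition dot (x y : vec) : R := \big[Rplus/0]_(i < 4) (x i * y i).

Definition refl (a x : vec) : vec := fun i => x i - 2 * dot x a * a i.

Definition mk4 (c0 c1 c2 c3 : R) : vec :=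
  fun i => match nat_of_ord i with 0 => c0 | 1 => c1 | 2 => c2 | _ => c3 end.

Definition is_sign (e : R) : Prop := e = 1 \/ e = -1.

(* Delta = DeltaP tau tau'; its Galois conjugate (tau <-> tau', rationals
   fixed) is DeltaP tau' tau. *)
Definition DeltaP (t t' : R) (v : vec) : Prop :=
  (exists (s : 'S_4) (e : R), is_sign e /\
      forall i, v i = mk4 e 0 0 0 (s i))
  \/ (exists e0 e1 e2 e3 : R,
        [/\ is_sign e0, is_sign e1, is_sign e2 & is_sign e3] /\
        forall i, v i = mk4 (e0 / 2) (e1 / 2) (e2 / 2) (e3 / 2) i)
  \/ (exists (s : 'S_4) (e1 e2 e3 : R),
        ~~ odd_perm s /\ [/\ is_sign e1, is_sign e2 & is_sign e3] /\
        forall i, v i = mk4 0 (e1 / 2) (e2 * t' / 2) (e3 * t / 2) (s i)).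

Definition Delta (v : vec) : Prop := DeltaP tau tau' v.
Definition Delta' (v : vec) : Prop := DeltaP tau' tau v.
Definition Kset (v : vec) : Prop := Delta v /\ Delta' v.
Definition dDelta (v : vec) : Prop := Delta v /\ ~ Kset v.
Definition dDelta' (v : vec) : Prop := Delta' v /\ ~ Kset v.

Definition Ztau := (Z * Z)%type.
Definition emb (y : Ztau) : R := IZR y.1 + IZR y.2 * tau.

(* F_4 = Z[tau]/2Z[tau] = {0, 1, tau, tau'}; note tau' = 1 - tau = 1 + tau mod 2 *)
Inductive F4 := F0 | F1 | Ftau | Ftau'.

Definition red (y : Ztau) : F4 :=
  match Z.odd y.1, Z.odd y.2 with
  | false, false => F0
  | true, false => F1
  | false, true => Ftau
  | true, true => Ftau'
  end.

Definition A0 (i : 'I_4) : F4 :=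
  match nat_of_ord i with 0 => F0 | 1 => F1 | 2 => Ftau' | _ => Ftau end.

Definition dotA (u : 'I_4 -> F4) : Prop :=
  exists s : 'S_4, ~~ odd_perm s /\ forall i, u i = A0 (s i).
Definition dotA' (u : 'I_4 -> F4) : Prop :=
  exists s : 'S_4, odd_perm s /\ forall i, u i = A0 (s i).

Definition dotS (n : nat) (x : vec) : Prop :=
  exists y : 'I_4 -> Ztau,
    (forall i, x i = emb (y i) / 2 ^ n) /\ dot x x = 1 /\ dotA (fun i => red (y i)).
Definition dotS' (n : nat) (x : vec) : Prop :=
  exists y : 'I_4 -> Ztau,
    (forall i, x i = emb (y i) / 2 ^ n) /\ dot x x = 1 /\ dotA' (fun i => red (y i)).

(* Main.v *)
From HB Require Import structures.
Require Import Defs.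
From Stdlib Require Import Reals ZArith Lra.
From mathcomp Require Import all_boot all_fingroup.

Set Implicit Arguments.
Unset Strict Implicit.
Unset Printing Implicit Defensive.

Definition o0 : 'I_4 := @Ordinal 4 0 isT.
Definition o1 : 'I_4 := @Ordinal 4 1 isT.
Definition o2 : 'I_4 := @Ordinal 4 2 isT.
Definition o3 : 'I_4 := @Ordinal 4 3 isT.

Lemma ord4P (i : 'I_4) : [\/ i = o0, i = o1, i = o2 | i = o3].
Proof. case: i => [[|[|[|[|k]]]] Hi]; try (by []); [constructor 1|constructor 2|constructor 3|constructor 4]; exact: val_inj. Qed.

Lemma tpE (x y z : 'I_4) : tperm x y z = if z == x then y else if z == y then x else z.
Proof. by case: tpermP => [->|->|/eqP/negPf-> /eqP/negPf->]; rewrite ?eqxx // ; case: eqP => // ->; rewrite eqxx. Qed.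

Definition oddv (a b c d : 'I_4) : bool :=
  odd ((b < a) + (c < a) + (d < a) + (c < b) + (d < b) + (d < c))%N.

Ltac noninj := match goal with
  | H1 : ?p ?a = ?v, H2 : ?p ?b = ?v |- _ =>
      solve [have := perm_inj (etrans H1 (esym H2)); move/(congr1 val) => /= //]
  end.
Lemma odd_perm_vals (p : 'S_4) : odd_perm p = oddv (p o0) (p o1) (p o2) (p o3).
Proof.
case: (ord4P (p o0)) => H0; case: (ord4P (p o1)) => H1; case: (ord4P (p o2)) => H2; case: (ord4P (p o3)) => H3; try by noninj.
- rewrite H0 H1 H2 H3; have -> : p = (1)%g by apply/permP => i; case: (ord4P i) => ->; rewrite ?permM ?perm1 ?tpE ?H0 ?H1 ?H2 ?H3.
  by rewrite ?odd_permM ?odd_perm1 ?odd_tperm.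
- rewrite H0 H1 H2 H3; have -> : p = (tperm o2 o3)%g by apply/permP => i; case: (ord4P i) => ->; rewrite ?permM ?perm1 ?tpE ?H0 ?H1 ?H2 ?H3.
  by rewrite ?odd_permM ?odd_perm1 ?odd_tperm.
- rewrite H0 H1 H2 H3; have -> : p = (tperm o1 o2)%g by apply/permP => i; case: (ord4P i) => ->; rewrite ?permM ?perm1 ?tpE ?H0 ?H1 ?H2 ?H3.
  by rewrite ?odd_permM ?odd_perm1 ?odd_tperm.
- rewrite H0 H1 H2 H3; have -> : p = (tperm o1 o2 * tperm o1 o3)%g by apply/permP => i; case: (ord4P i) => ->; rewrite ?permM ?perm1 ?tpE ?H0 ?H1 ?H2 ?H3.
  by rewrite ?odd_permM ?odd_perm1 ?odd_tperm.
- rewrite H0 H1 H2 H3; have -> : p = (tperm o1 o2 * tperm o2 o3)%g by apply/permP => i; case: (ord4P i) => ->; rewrite ?permM ?perm1 ?tpE ?H0 ?H1 ?H2 ?H3.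
  by rewrite ?odd_permM ?odd_perm1 ?odd_tperm.
- rewrite H0 H1 H2 H3; have -> : p = (tperm o1 o3)%g by apply/permP => i; case: (ord4P i) => ->; rewrite ?permM ?perm1 ?tpE ?H0 ?H1 ?H2 ?H3.
  by rewrite ?odd_permM ?odd_perm1 ?odd_tperm.
- rewrite H0 H1 H2 H3; have -> : p = (tperm o0 o1)%g by apply/permP => i; case: (ord4P i) => ->; rewrite ?permM ?perm1 ?tpE ?H0 ?H1 ?H2 ?H3.
  by rewrite ?odd_permM ?odd_perm1 ?odd_tperm.
- rewrite H0 H1 H2 H3; have -> : p = (tperm o0 o1 * tperm o2 o3)%g by apply/permP => i; case: (ord4P i) => ->; rewrite ?permM ?perm1 ?tpE ?H0 ?H1 ?H2 ?H3.
  by rewrite ?odd_permM ?odd_perm1 ?odd_tperm.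
- rewrite H0 H1 H2 H3; have -> : p = (tperm o0 o1 * tperm o0 o2)%g by apply/permP => i; case: (ord4P i) => ->; rewrite ?permM ?perm1 ?tpE ?H0 ?H1 ?H2 ?H3.
  by rewrite ?odd_permM ?odd_perm1 ?odd_tperm.
- rewrite H0 H1 H2 H3; have -> : p = (tperm o0 o1 * tperm o0 o2 * tperm o0 o3)%g by apply/permP => i; case: (ord4P i) => ->; rewrite ?permM ?perm1 ?tpE ?H0 ?H1 ?H2 ?H3.
  by rewrite ?odd_permM ?odd_perm1 ?odd_tperm.
- rewrite H0 H1 H2 H3; have -> : p = (tperm o0 o1 * tperm o0 o2 * tperm o2 o3)%g by apply/permP => i; case: (ord4P i) => ->; rewrite ?permM ?perm1 ?tpE ?H0 ?H1 ?H2 ?H3.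
  by rewrite ?odd_permM ?odd_perm1 ?odd_tperm.
- rewrite H0 H1 H2 H3; have -> : p = (tperm o0 o1 * tperm o0 o3)%g by apply/permP => i; case: (ord4P i) => ->; rewrite ?permM ?perm1 ?tpE ?H0 ?H1 ?H2 ?H3.
  by rewrite ?odd_permM ?odd_perm1 ?odd_tperm.
- rewrite H0 H1 H2 H3; have -> : p = (tperm o0 o1 * tperm o1 o2)%g by apply/permP => i; case: (ord4P i) => ->; rewrite ?permM ?perm1 ?tpE ?H0 ?H1 ?H2 ?H3.
  by rewrite ?odd_permM ?odd_perm1 ?odd_tperm.
- rewrite H0 H1 H2 H3; have -> : p = (tperm o0 o1 * tperm o1 o2 * tperm o1 o3)%g by apply/permP => i; case: (ord4P i) => ->; rewrite ?permM ?perm1 ?tpE ?H0 ?H1 ?H2 ?H3.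
  by rewrite ?odd_permM ?odd_perm1 ?odd_tperm.
- rewrite H0 H1 H2 H3; have -> : p = (tperm o0 o2)%g by apply/permP => i; case: (ord4P i) => ->; rewrite ?permM ?perm1 ?tpE ?H0 ?H1 ?H2 ?H3.
  by rewrite ?odd_permM ?odd_perm1 ?odd_tperm.
- rewrite H0 H1 H2 H3; have -> : p = (tperm o0 o2 * tperm o0 o3)%g by apply/permP => i; case: (ord4P i) => ->; rewrite ?permM ?perm1 ?tpE ?H0 ?H1 ?H2 ?H3.
  by rewrite ?odd_permM ?odd_perm1 ?odd_tperm.
- rewrite H0 H1 H2 H3; have -> : p = (tperm o0 o2 * tperm o1 o3)%g by apply/permP => i; case: (ord4P i) => ->; rewrite ?permM ?perm1 ?tpE ?H0 ?H1 ?H2 ?H3.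
  by rewrite ?odd_permM ?odd_perm1 ?odd_tperm.
- rewrite H0 H1 H2 H3; have -> : p = (tperm o0 o1 * tperm o0 o3 * tperm o1 o2)%g by apply/permP => i; case: (ord4P i) => ->; rewrite ?permM ?perm1 ?tpE ?H0 ?H1 ?H2 ?H3.
  by rewrite ?odd_permM ?odd_perm1 ?odd_tperm.
- rewrite H0 H1 H2 H3; have -> : p = (tperm o0 o1 * tperm o1 o2 * tperm o2 o3)%g by apply/permP => i; case: (ord4P i) => ->; rewrite ?permM ?perm1 ?tpE ?H0 ?H1 ?H2 ?H3.
  by rewrite ?odd_permM ?odd_perm1 ?odd_tperm.
- rewrite H0 H1 H2 H3; have -> : p = (tperm o0 o1 * tperm o1 o3)%g by apply/permP => i; case: (ord4P i) => ->; rewrite ?permM ?perm1 ?tpE ?H0 ?H1 ?H2 ?H3.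
  by rewrite ?odd_permM ?odd_perm1 ?odd_tperm.
- rewrite H0 H1 H2 H3; have -> : p = (tperm o0 o2 * tperm o2 o3)%g by apply/permP => i; case: (ord4P i) => ->; rewrite ?permM ?perm1 ?tpE ?H0 ?H1 ?H2 ?H3.
  by rewrite ?odd_permM ?odd_perm1 ?odd_tperm.
- rewrite H0 H1 H2 H3; have -> : p = (tperm o0 o3)%g by apply/permP => i; case: (ord4P i) => ->; rewrite ?permM ?perm1 ?tpE ?H0 ?H1 ?H2 ?H3.
  by rewrite ?odd_permM ?odd_perm1 ?odd_tperm.
- rewrite H0 H1 H2 H3; have -> : p = (tperm o0 o1 * tperm o0 o2 * tperm o1 o3)%g by apply/permP => i; case: (ord4P i) => ->; rewrite ?permM ?perm1 ?tpE ?H0 ?H1 ?H2 ?H3.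
  by rewrite ?odd_permM ?odd_perm1 ?odd_tperm.
- rewrite H0 H1 H2 H3; have -> : p = (tperm o0 o3 * tperm o1 o2)%g by apply/permP => i; case: (ord4P i) => ->; rewrite ?permM ?perm1 ?tpE ?H0 ?H1 ?H2 ?H3.
  by rewrite ?odd_permM ?odd_perm1 ?odd_tperm.
Qed.

Definition F4add (u v : F4) : F4 :=
  match u, v with
  | F0, w => w | w, F0 => w
  | F1, F1 => F0 | F1, Ftau => Ftau' | F1, Ftau' => Ftau
  | Ftau, F1 => Ftau' | Ftau, Ftau => F0 | Ftau, Ftau' => F1
  | Ftau', F1 => Ftau | Ftau', Ftau => F1 | Ftau', Ftau' => F0
  end.
Definition F4mul (u v : F4) : F4 :=
  match u, v with
  | F0, _ => F0 | _, F0 => F0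
  | F1, w => w | w, F1 => w
  | Ftau, Ftau => Ftau' | Ftau, Ftau' => F1
  | Ftau', Ftau => F1 | Ftau', Ftau' => Ftau
  end.

Lemma F4addA : associative F4add. Proof. by do 3 case. Qed.
Lemma F4addC : commutative F4add. Proof. by do 2 case. Qed.
Lemma F4add0 : left_id F0 F4add. Proof. by case. Qed.
HB.instance Definition _ := Monoid.isComLaw.Build F4 F0 F4add F4addA F4addC F4add0.

Lemma big4 (T : Type) (idx : T) (op : T -> T -> T) (F : 'I_4 -> T) :
  \big[op/idx]_(i < 4) F i = op (F o0) (op (F o1) (op (F o2) (op (F o3) idx))).
Proof.
rewrite !big_ord_recl big_ord0.
have e0 : (@ord0 3) = o0 by apply: val_inj.
have e1 : (@lift 4 (@ord0 3) (@ord0 2)) = o1 by apply: val_inj.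
have e2 : (@lift 4 (@ord0 3) (@lift 3 (@ord0 2) (@ord0 1))) = o2 by apply: val_inj.
have e3 : (@lift 4 (@ord0 3) (@lift 3 (@ord0 2) (@lift 2 (@ord0 1) (@ord0 0)))) = o3 by apply: val_inj.
by rewrite e3 e2 e1 e0.
Qed.

Definition D4 (u v : 'I_4 -> F4) : F4 :=
  F4add (F4mul (u o0) (v o0)) (F4add (F4mul (u o1) (v o1))
    (F4add (F4mul (u o2) (v o2)) (F4add (F4mul (u o3) (v o3)) F0))).

Lemma D4_big u v : D4 u v = \big[F4add/F0]_(i < 4) F4mul (u i) (v i).
Proof. by rewrite big4. Qed.

Lemma D4_ext u v u' v' : (forall i, u i = u' i) -> (forall i, v i = v' i) -> D4 u v = D4 u' v'.
Proof. by move=> Hu Hv; rewrite /D4 !Hu !Hv. Qed.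

Lemma Dnz (p : 'S_4) : odd_perm p -> D4 A0 (fun i => A0 (p i)) <> F0.
Proof.
rewrite odd_perm_vals /D4.
case: (ord4P (p o0)) => H0; case: (ord4P (p o1)) => H1; case: (ord4P (p o2)) => H2; case: (ord4P (p o3)) => H3; try by noninj.
all: by rewrite H0 H1 H2 H3.
Qed.

Definition rho : 'S_4 := (tperm o1 o3 * tperm o1 o2)%g.
Definition rho' : 'S_4 := (tperm o1 o2 * tperm o1 o3)%g.

Lemma rhoE j : F4mul Ftau (A0 j) = A0 (rho j).
Proof. by case: (ord4P j) => ->; rewrite /rho permM !tpE. Qed.
Lemma rho'E j : F4mul Ftau' (A0 j) = A0 (rho' j).
Proof. by case: (ord4P j) => ->; rewrite /rho' permM !tpE. Qed.
Lemma F1E j : F4mul F1 (A0 j) = A0 j.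
Proof. by case: (ord4P j) => ->. Qed.

Lemma keyF (p q : 'S_4) : odd_perm p != odd_perm q ->
  exists r : 'S_4, odd_perm r = odd_perm q /\
    forall i, F4mul (D4 (fun i => A0 (p i)) (fun i => A0 (q i))) (A0 (q i)) = A0 (r i).
Proof.
move=> Hpq.
set pi := (p^-1 * q)%g.
have Hpi : odd_perm pi by rewrite /pi odd_permM odd_permV; move: Hpq; do 2 case: odd_perm.
have ED : D4 (fun i => A0 (p i)) (fun i => A0 (q i)) = D4 A0 (fun i => A0 (pi i)).
  rewrite !D4_big.
  rewrite [RHS](reindex_inj (@perm_inj _ p)) /=.
  by apply: eq_bigr => i _; rewrite /pi permM permK.
rewrite ED; have := Dnz Hpi; case: (D4 _ _) => // _.
- by exists q; split => // i; rewrite F1E.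
- exists (q * rho)%g; split; first by rewrite odd_permM /rho odd_permM !odd_tperm addbF.
  by move=> i; rewrite rhoE permM.
- exists (q * rho')%g; split; first by rewrite odd_permM /rho' odd_permM !odd_tperm addbF.
  by move=> i; rewrite rho'E permM.
Qed.

Local Open Scope R_scope.

HB.instance Definition _ := Monoid.isComLaw.Build R 0 Rplus
  (fun a b c => esym (Rplus_assoc a b c)) Rplus_comm Rplus_0_l.

Lemma dot4 (x y : vec) : dot x y = x o0 * y o0 + (x o1 * y o1 + (x o2 * y o2 + (x o3 * y o3 + 0))).
Proof. by rewrite /dot big4. Qed.

Lemma tau_sq : tau * tau = tau + 1.
Proof.
unfold tau. have h := sqrt_sqrt 5 ltac:(lra).
replace ((1 + sqrt 5) / 2 * ((1 + sqrt 5) / 2)) with ((1 + 2 * sqrt 5 + sqrt 5 * sqrt 5) / 4) by field.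
rewrite h; field.
Qed.

Lemma tau'E : tau' = 1 - tau.
Proof. unfold tau, tau'; field. Qed.

Lemma tau_sum2 : tau * tau + tau' * tau' = 3.
Proof. rewrite tau'E. have h := tau_sq. nra. Qed.

Definition zadd (u v : Ztau) : Ztau := ((u.1 + v.1)%Z, (u.2 + v.2)%Z).
Definition zmul (u v : Ztau) : Ztau :=
  ((u.1 * v.1 + u.2 * v.2)%Z, (u.1 * v.2 + u.2 * v.1 + u.2 * v.2)%Z).
Definition zsub (u v : Ztau) : Ztau := ((u.1 - v.1)%Z, (u.2 - v.2)%Z).
Definition z2 (u : Ztau) : Ztau := ((2 * u.1)%Z, (2 * u.2)%Z).

Lemma emb_add u v : emb (zadd u v) = emb u + emb v.
Proof. case: u => a b; case: v => c d; rewrite /emb /zadd; cbn [fst snd]; rewrite !plus_IZR; ring. Qed.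
Lemma emb_sub u v : emb (zsub u v) = emb u - emb v.
Proof. case: u => a b; case: v => c d; rewrite /emb /zsub; cbn [fst snd]; rewrite !minus_IZR; ring. Qed.
Lemma emb_2 u : emb (z2 u) = 2 * emb u.
Proof. case: u => a b; rewrite /emb /z2; cbn [fst snd]; rewrite !mult_IZR; ring. Qed.
Lemma emb_mul u v : emb (zmul u v) = emb u * emb v.
Proof.
case: u => a b; case: v => c d; rewrite /emb /zmul; cbn [fst snd]; rewrite !plus_IZR !mult_IZR.
have h := tau_sq.
transitivity (IZR a * IZR c + IZR b * IZR d * (tau * tau) + (IZR a * IZR d + IZR b * IZR c) * tau).
  rewrite h; ring.
ring.
Qed.
Lemma emb_0 : emb (0%Z, 0%Z) = 0.
Proof. rewrite /emb /=; ring. Qed.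

Lemma red_add u v : red (zadd u v) = F4add (red u) (red v).
Proof.
case: u => a b; case: v => c d; rewrite /red /zadd; cbn [fst snd]; rewrite !Z.odd_add.
by case: (Z.odd a); case: (Z.odd b); case: (Z.odd c); case: (Z.odd d).
Qed.
Lemma red_mul u v : red (zmul u v) = F4mul (red u) (red v).
Proof.
case: u => a b; case: v => c d; rewrite /red /zmul; cbn [fst snd]; rewrite !Z.odd_add !Z.odd_mul.
by case: (Z.odd a); case: (Z.odd b); case: (Z.odd c); case: (Z.odd d).
Qed.
Lemma red_sub2 u v : red (zsub (z2 u) v) = red v.
Proof.
case: u => a b; case: v => c d; rewrite /red /zsub /z2; cbn [fst snd]; rewrite !Z.odd_sub !Z.odd_mul; cbn [Z.odd andb xorb].
by case: (Z.odd c); case: (Z.odd d).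
Qed.

Definition dZ (y b : 'I_4 -> Ztau) : Ztau :=
  zadd (zmul (y o0) (b o0)) (zadd (zmul (y o1) (b o1))
    (zadd (zmul (y o2) (b o2)) (zadd (zmul (y o3) (b o3)) (0%Z, 0%Z)))).

Lemma red_dZ y b : red (dZ y b) = D4 (fun i => red (y i)) (fun i => red (b i)).
Proof. by rewrite /dZ /D4 !red_add !red_mul. Qed.

Lemma reflG n (x a : vec) (y b : 'I_4 -> Ztau) :
  (forall i, x i = emb (y i) / 2 ^ n) -> (forall i, a i = emb (b i) / 2) ->
  forall i, refl a x i = emb (zsub (z2 (y i)) (zmul (dZ y b) (b i))) / 2 ^ n.+1.
Proof.
move=> Hx Ha i.
rewrite /refl dot4 !Hx !Ha emb_sub emb_2 emb_mul /dZ !emb_add !emb_mul emb_0.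
change (2 ^ n.+1) with (2 * 2 ^ n).
have hn : 2 ^ n <> 0 by apply: pow_nonzero; lra.
field; exact: hn.
Qed.

Lemma refl_norm (a x : vec) : dot a a = 1 -> dot x x = 1 -> dot (refl a x) (refl a x) = 1.
Proof.
move=> Ha Hx; rewrite /refl.
move Hk : (dot x a) => k.
rewrite !dot4 in Ha Hx Hk *.
have e1 := f_equal (fun t => k * k * t) Ha.
have e2 := f_equal (fun t => k * t) Hk.
simpl in e1, e2.
lra.
Qed.

Lemma sum_perm (g : 'I_4 -> R) (s : 'S_4) :
  \big[Rplus/0]_(i < 4) g (s i) = \big[Rplus/0]_(i < 4) g i.
Proof. by rewrite [RHS](reindex_inj (@perm_inj _ s)). Qed.

Lemma sign_Z e : is_sign e -> exists E : Z, e = IZR E /\ Z.odd E = true.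
Proof. by case=> ->; [exists 1%Z | exists (-1)%Z]. Qed.

Lemma norm_g (s : 'S_4) (a : vec) e1 e2 e3 u w :
  is_sign e1 -> is_sign e2 -> is_sign e3 -> u * u + w * w = 3 ->
  (forall i, a i = mk4 0 (e1 / 2) (e2 * u / 2) (e3 * w / 2) (s i)) -> dot a a = 1.
Proof.
move=> H1 H2 H3 Huw Ha.
set g := mk4 0 (e1 / 2) (e2 * u / 2) (e3 * w / 2).
rewrite /dot (eq_bigr (fun i => g (s i) * g (s i))); last by move=> i _; rewrite Ha.
rewrite (sum_perm (fun j => g j * g j)) big4 /g; cbv beta iota delta [mk4 o0 o1 o2 o3 nat_of_ord].
case: H1 => ->; case: H2 => ->; case: H3 => ->; nra.
Qed.

Lemma main_gen n (a x : vec) (b y : 'I_4 -> Ztau) (p q : 'S_4) :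
  (forall i, x i = emb (y i) / 2 ^ n) -> dot x x = 1 -> (forall i, red (y i) = A0 (p i)) ->
  (forall i, a i = emb (b i) / 2) -> dot a a = 1 -> (forall i, red (b i) = A0 (q i)) ->
  odd_perm p != odd_perm q ->
  exists z : 'I_4 -> Ztau, (forall i, refl a x i = emb (z i) / 2 ^ n.+1) /\
    dot (refl a x) (refl a x) = 1 /\
    exists r : 'S_4, odd_perm r = odd_perm q /\ forall i, red (z i) = A0 (r i).
Proof.
move=> Hx Hxx Hy Ha Haa Hb Hpq.
exists (fun i => zsub (z2 (y i)) (zmul (dZ y b) (b i))).
split; first exact: reflG.
split; first exact: refl_norm.
have [r [Hr Hri]] := keyF Hpq.
exists r; split => // i.
rewrite red_sub2 red_mul red_dZ Hb -Hri; congr F4mul.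
exact: D4_ext.
Qed.

Definition mk4T {T} (c0 c1 c2 c3 : T) (i : 'I_4) : T :=
  match nat_of_ord i with 0%N => c0 | 1%N => c1 | 2%N => c2 | _ => c3 end.

Ltac ev := cbv beta iota delta [mk4 mk4T o0 o1 o2 o3 nat_of_ord].

Lemma beta1 (s : 'S_4) (a : vec) e1 e2 e3 :
  is_sign e1 -> is_sign e2 -> is_sign e3 ->
  (forall i, a i = mk4 0 (e1 / 2) (e2 * tau / 2) (e3 * tau' / 2) (s i)) ->
  exists b : 'I_4 -> Ztau, (forall i, a i = emb (b i) / 2) /\
    forall i, red (b i) = A0 ((s * tperm o2 o3)%g i).
Proof.
move=> /sign_Z [E1 [-> O1]] /sign_Z [E2 [-> O2]] /sign_Z [E3 [-> O3]] Ha.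
exists (fun i => mk4T (0%Z, 0%Z) (E1, 0%Z) (0%Z, E2) (E3, (- E3)%Z) (s i)).
split => i.
  rewrite Ha; case: (ord4P (s i)) => ->; ev; rewrite /emb; cbn [fst snd];
  rewrite ?tau'E ?opp_IZR; field.
rewrite permM tpE; case: (ord4P (s i)) => ->; rewrite /red /=; ev; cbn [fst snd];
  rewrite ?Z.odd_opp ?O1 ?O2 ?O3 //.
Qed.

Lemma beta2 (s : 'S_4) (a : vec) e1 e2 e3 :
  is_sign e1 -> is_sign e2 -> is_sign e3 ->
  (forall i, a i = mk4 0 (e1 / 2) (e2 * tau' / 2) (e3 * tau / 2) (s i)) ->
  exists b : 'I_4 -> Ztau, (forall i, a i = emb (b i) / 2) /\
    forall i, red (b i) = A0 (s i).
Proof.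
move=> /sign_Z [E1 [-> O1]] /sign_Z [E2 [-> O2]] /sign_Z [E3 [-> O3]] Ha.
exists (fun i => mk4T (0%Z, 0%Z) (E1, 0%Z) (E2, (- E2)%Z) (0%Z, E3) (s i)).
split => i.
  rewrite Ha; case: (ord4P (s i)) => ->; ev; rewrite /emb; cbn [fst snd];
  rewrite ?tau'E ?opp_IZR; field.
case: (ord4P (s i)) => ->; rewrite /red /=; ev; cbn [fst snd];
  rewrite ?Z.odd_opp ?O1 ?O2 ?O3 //.
Qed.

Theorem mainTheorem2 (n : nat) (hn : (1 <= n)%N) :
  (forall a' : vec, dDelta' a' -> forall x : vec, dotS n x -> dotS' n.+1 (refl a' x))
  /\ (forall a : vec, dDelta a -> forall x : vec, dotS' n x -> dotS n.+1 (refl a x)).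
Proof.
split.
- move=> a [HD HnK] x [y [Hx [Hxx [p [Hp Hyp]]]]].
  case: HD => [[s [e [He Ha]]] | [[e0 [e1 [e2 [e3 [[H0 H1 H2 H3] Ha]]]]] | [s [e1 [e2 [e3 [Hs [[H1 H2 H3] Ha]]]]]]]].
  + exfalso; apply: HnK; split; left; by exists s, e.
  + exfalso; apply: HnK; split; right; left; by exists e0, e1, e2, e3.
  + have [b [Hb Hbr]] := beta1 H1 H2 H3 Ha.
    have Haa : dot a a = 1 by apply: (norm_g H1 H2 H3 _ Ha); exact: tau_sum2.
    have Hq : odd_perm (s * tperm o2 o3)%g by rewrite odd_permM odd_tperm (negPf Hs).
    have Hpq : odd_perm p != odd_perm (s * tperm o2 o3)%g by rewrite Hq (negPf Hp).
    have [z [Hz [Hzz [r [Hr Hri]]]]] := main_gen Hx Hxx Hyp Hb Haa Hbr Hpq.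
    exists z; split => //; split => //; exists r; split => //; by rewrite Hr.
- move=> a [HD HnK] x [y [Hx [Hxx [p [Hp Hyp]]]]].
  case: HD => [[s [e [He Ha]]] | [[e0 [e1 [e2 [e3 [[H0 H1 H2 H3] Ha]]]]] | [s [e1 [e2 [e3 [Hs [[H1 H2 H3] Ha]]]]]]]].
  + exfalso; apply: HnK; split; left; by exists s, e.
  + exfalso; apply: HnK; split; right; left; by exists e0, e1, e2, e3.
  + have [b [Hb Hbr]] := beta2 H1 H2 H3 Ha.
    have Haa : dot a a = 1 by apply: (norm_g H1 H2 H3 _ Ha); rewrite Rplus_comm; exact: tau_sum2.
    have Hpq : odd_perm p != odd_perm s by rewrite Hp (negPf Hs).
    have [z [Hz [Hzz [r [Hr Hri]]]]] := main_gen Hx Hxx Hyp Hb Haa Hbr Hpq.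
    exists z; split => //; split => //; exists r; split => //; by rewrite Hr.
Qed.
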